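(* Let $\mathbf{f}_1,\mathbf{f}_2,\mathbf{g}$ be power sums such that the multiplicative group generated by all their roots is torsion-free and $\mathbf{f}_1$ is reduced. Suppose that $\mathbf{f}_2=\mathbf{f}_1\cdot\mathbf{g}$ (as functions of $n$). Then every root of $\mathbf{f}_1$ has finite index in the group generated by the roots of $\mathbf{f}_2$, i.e. for every root $\gamma$ of $\mathbf{f}_1$ some positive integer power of $\gamma$ lies in the multiplicative group generated by the roots of $\mathbf{f}_2$.
   Context: A power sum is a function $n\mapsto\mathbf{f}(n)=\sum_{i=1}^k b_i\alpha_i^n$ with $k\ge1$, nonzero complex coefficients $b_i$ and pairwise distinct nonzero complex numbers $\alpha_i$; this representation is unique and the $\alpha_i$ are the roots of $\mathbf{f}$. A power sum is reduced if one of its roots equals $1$. *)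

(* Defs.v *)
From mathcomp Require Import all_boot all_order all_algebra.
From mathcomp Require Import complex.
From mathcomp Require Import reals.
Set Implicit Arguments. Unset Strict Implicit. Unset Printing Implicit Defensive.
Import Order.TTheory GRing.Theory Num.Theory.
Local Open Scope ring_scope.

(* A power sum is given by its coefficient list b and its root list a:
   n |-> \sum_i b_i a_i^n, with k >= 1 terms, nonzero coefficients and
   pairwise distinct nonzero roots. *)
Definition is_power_sum {C : fieldType} (b a : seq C) : Prop :=
  [/\ size b = size a, (0 < size a)%N, all (fun x => x != 0) b,
      all (fun x => x != 0) a & uniq a].

Definition psum {C : fieldType} (b a : seq C) (n : nat) : C :=
  \sum_(i < size a) b`_i * a`_i ^+ n.

Definition in_gen {C : fieldType} (S : seq C) (x : C) : Prop :=
  exists ks : seq int, size ks = size S /\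
    x = \prod_(i < size S) S`_i ^ ks`_i.

Definition gen_torsion_free {C : fieldType} (S : seq C) : Prop :=
  forall x : C, in_gen S x -> forall m : nat, (0 < m)%N -> x ^+ m = 1 -> x = 1.

(* Main.v *)
Require Import Defs.
From mathcomp Require Import all_boot all_order all_algebra.
From mathcomp Require Import complex.
From mathcomp Require Import reals.
From Stdlib Require Import Classical.
From mathcomp Require Import zify ring lra.
Import GRing.Theory Num.Theory.
Local Open Scope ring_scope.
Set Implicit Arguments. Unset Strict Implicit.


Lemma group_zero (C : fieldType) (l : seq (C * C)) :
  (forall n, \sum_(p <- l) p.1 * p.2 ^+ n = 0) ->
  forall x, \sum_(p <- l | p.2 == x) p.1 = 0.
Proof.
move=> H x.
set q := \prod_(y <- map snd l | y != x) ('X - y%:P).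
have A : \sum_(p <- l) p.1 * q.[p.2] = 0.
  under eq_bigr => p _ do rewrite horner_coef mulr_sumr.
  rewrite exchange_big /= big1 // => k _.
  under eq_bigr => p _ do rewrite mulrCA.
  by rewrite -mulr_sumr H mulr0.
have B : forall p, p \in l -> p.2 != x -> q.[p.2] = 0.
  move=> p pl px; apply/eqP; rewrite horner_prod prodf_seq_eq0.
  apply/hasP; exists p.2; first exact: map_f.
  by rewrite px hornerXsubC subrr eqxx.
have qx : q.[x] != 0.
  rewrite horner_prod prodf_seq_neq0; apply/allP => y _; apply/implyP => yx.
  by rewrite hornerXsubC subr_eq0 eq_sym.
move: A; rewrite (bigID (fun p => p.2 == x)) /=.
have -> : \sum_(p <- l | p.2 != x) p.1 * q.[p.2] = 0.
  rewrite big_seq_cond big1 // => p /andP[pl px]; by rewrite B ?mulr0.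
rewrite addr0.
rewrite big_seq_cond.
rewrite (eq_bigr (fun p => q.[x] * p.1)); last first.
  by move=> p /andP[_ /eqP ->]; rewrite mulrC.
rewrite -big_seq_cond -mulr_sumr => /eqP; rewrite mulf_eq0 (negbTE qx) /=.
by move/eqP.
Qed.


Section Ev.
Variable C : fieldType.
Variable S : seq C.
Hypothesis Snz : all (fun x => x != 0) S.

Definition ev (k : 'rV[int]_(size S)) : C := \prod_(i < size S) S`_i ^ (k 0 i).

Lemma S_nz (i : 'I_(size S)) : S`_i != 0.
Proof. by move/allP: Snz; apply; apply: mem_nth. Qed.

Lemma ev_add a b : ev (a + b) = ev a * ev b.
Proof. by rewrite /ev -big_split; apply: eq_bigr => i _; rewrite mxE expfzDr ?S_nz. Qed.

Lemma ev0 : ev 0 = 1.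
Proof. by rewrite /ev big1 // => i _; rewrite mxE expr0z. Qed.

Lemma prodXz (I : Type) (r : seq I) (F : I -> C) (z : int) :
  (\prod_(i <- r) F i) ^ z = \prod_(i <- r) F i ^ z.
Proof.
elim: r => [|x r IH]; first by rewrite !big_nil exp1rz.
by rewrite !big_cons expfzMl IH.
Qed.

Lemma ev_scale z a : ev (z *: a) = ev a ^ z.
Proof.
by rewrite /ev prodXz; apply: eq_bigr => i _; rewrite mxE exprz_exp mulrC.
Qed.

Lemma ev_nz a : ev a != 0.
Proof.
rewrite /ev prodf_seq_neq0; apply/allP => i _ /=.
by rewrite expfz_eq0 negb_and S_nz orbT.
Qed.

Lemma ev_neg a : ev (- a) = (ev a)^-1.
Proof.
by apply: (mulfI (ev_nz a)); rewrite -ev_add subrr ev0 mulfV ?ev_nz.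
Qed.

Lemma ev_mulrn a m : ev (a *+ m) = ev a ^+ m.
Proof. by elim: m => [|m IH]; rewrite ?mulr0n ?ev0 ?expr0 // mulrS ev_add IH exprS. Qed.

Definition eN (i : nat) : 'rV[int]_(size S) := \row_(j < size S) ((j == i :> nat)%:R).

Lemma ev_eN i : (i < size S)%N -> ev (eN i) = S`_i.
Proof.
move=> hi; rewrite /ev (bigD1 (Ordinal hi)) //= big1 ?mulr1.
  by rewrite mxE eqxx expr1z.
by move=> j /negbTE ji; rewrite mxE; move: ji; rewrite -val_eqE /= => ->; rewrite expr0z.
Qed.

Lemma in_genP x : in_gen S x <-> exists k, x = ev k.
Proof.
split.
  move=> [ks [_ ->]]; exists (\row_i ks`_i); rewrite /ev.
  by apply: eq_bigr => i _; rewrite mxE.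
move=> [k ->]; exists [seq k 0 i | i <- enum 'I_(size S)].
rewrite size_map size_enum_ord; split => //.
apply: eq_bigr => i _; congr (_ ^ _).
by rewrite (nth_map i) ?size_enum_ord // nth_ord_enum.
Qed.

Lemma in_gen_ev k : in_gen S (ev k).
Proof. by apply/in_genP; exists k. Qed.

End Ev.

Lemma in_gen_mul (C : fieldType) (S : seq C) : all (fun x => x != 0) S ->
  forall x y, in_gen S x -> in_gen S y -> in_gen S (x * y).
Proof.
move=> Snz x y /in_genP [a ->] /in_genP [b ->]; apply/in_genP.
by exists (a + b); rewrite ev_add.
Qed.

Lemma in_gen_exp (C : fieldType) (S : seq C) : all (fun x => x != 0) S ->
  forall x z, in_gen S x -> in_gen S (x ^ z).
Proof.
move=> Snz x z /in_genP [a ->]; apply/in_genP.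
by exists (z *: a); rewrite ev_scale.
Qed.

Lemma in_gen1 (C : fieldType) (S : seq C) : in_gen S 1.
Proof. by apply/in_genP; exists 0; rewrite ev0. Qed.

Lemma in_gen_mem (C : fieldType) (S : seq C) : all (fun x => x != 0) S ->
  forall x, x \in S -> in_gen S x.
Proof.
move=> Snz x /(nthP 0) [i hi <-]; apply/in_genP.
by exists (eN S i); rewrite ev_eN.
Qed.


Definition chi s (w : 'cV[rat]_s) (k : 'rV[int]_s) : rat :=
  (map_mx (intr : int -> rat) k *m w) 0 0.

Lemma chiD s (w : 'cV[rat]_s) k k' : chi w (k + k') = chi w k + chi w k'.
Proof. by rewrite /chi map_mxD mulmxDl mxE. Qed.

Lemma chiN s (w : 'cV[rat]_s) k : chi w (- k) = - chi w k.
Proof. by rewrite /chi map_mxN mulNmx mxE. Qed.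

Lemma chiB s (w : 'cV[rat]_s) k k' : chi w (k - k') = chi w k - chi w k'.
Proof. by rewrite chiD chiN. Qed.

Lemma chi0 s (w : 'cV[rat]_s) : chi w 0 = 0.
Proof. by rewrite /chi map_mx0 mul0mx mxE. Qed.

Lemma chi_opp s (w : 'cV[rat]_s) k : chi (- w) k = - chi w k.
Proof. by rewrite /chi mulmxN mxE. Qed.

Lemma basis_ex s (T : 'rV[int]_s -> Prop) :
  exists n (A : 'M[int]_(n, s)), (forall i, T (row i A)) /\
    forall t, T t -> (map_mx (intr : int -> rat) t <= map_mx intr A)%MS.
Proof.
suff: forall r n (A : 'M[int]_(n, s)),
    (s - \rank (map_mx (intr : int -> rat) A) <= r)%N -> (forall i, T (row i A)) ->
  exists n (A : 'M[int]_(n, s)), (forall i, T (row i A)) /\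
    forall t, T t -> (map_mx (intr : int -> rat) t <= map_mx intr A)%MS.
  move=> /(_ s 0%N 0); apply; first exact: leq_subr.
  by move=> [].
elim=> [|r IH] n A hr hA.
  exists n, A; split=> // t _; apply: submx_full.
  rewrite /row_full eqn_leq rank_leq_col /=.
  by move: hr; rewrite leqn0 subn_eq0.
destruct (classic (forall t, T t -> (map_mx (intr : int -> rat) t <= map_mx intr A)%MS))
  as [H|H]; first by exists n, A.
apply not_all_ex_not in H as [t Ht].
apply imply_to_and in Ht as [Tt Ht].
apply: (IH _ (col_mx A t)).
  have lt : (map_mx (intr : int -> rat) A < map_mx intr (col_mx A t))%MS.
    rewrite ltmxE map_col_mx col_mx_sub submx_refl /= (negbTE (introN idP Ht)) andbT.
    by rewrite -addsmxE addsmxSl.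
  have := rank_ltmx lt.
  have := rank_leq_col (map_mx (intr : int -> rat) (col_mx A t)).
  move: hr; set a := \rank _; set b := \rank _ => h1 h2 h3.
  have h4 : (a <= s)%N by exact: rank_leq_col.
  lia.
move=> i; rewrite -(splitK i); case: split => j /=.
  by rewrite rowKu.
by rewrite rowKd (_ : j = 0) ?row_id // ord1.
Qed.

Lemma clear_den n (u : 'rV[rat]_n) : exists m : nat, (0 < m)%N /\
  exists z : 'rV[int]_n, map_mx intr z = m%:R *: u.
Proof.
exists (\prod_(i < n) absz (denq (u ord0 i))); split.
  by apply: prodn_gt0 => i; rewrite absz_gt0 denq_neq0.
exists (\row_i ((\prod_(j < n | j != i) absz (denq (u ord0 j)))%:Z * numq (u ord0 i))).
apply/matrixP => i j; rewrite (ord1 i) !mxE [in RHS](bigD1 j) //=.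
set P := (\prod_(_ < n | _) _)%N.
set d := denq (u ord0 j); set N := numq (u ord0 j).
have -> : ((absz d * P)%N%:R : rat) = d%:~R * P%:R.
  by rewrite natrM natr_absz ger0_norm // denq_ge0.
have eu : u 0 j = N%:~R / d%:~R by rewrite /N /d divq_num_den.
have dn : (d%:~R : rat) != 0 by rewrite intr_eq0 denq_neq0.
rewrite eu rmorphM /= -pmulrn; field.
exact: dn.
Qed.

Lemma sep s (T : 'rV[int]_s -> Prop) :
  T 0 -> (forall a b, T a -> T b -> T (a + b)) ->
  (forall (z : int) a, T a -> T (z *: a)) ->
  forall v, (forall m, (0 < m)%N -> ~ T (v *+ m)) ->
  exists w : 'cV[rat]_s, (forall t, T t -> chi w t = 0) /\ chi w v != 0.
Proof.
move=> T0 TD TZ v Hv.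
have [n [A [hA hT]]] := basis_ex T.
set AQ := map_mx (intr : int -> rat) A.
have nv : ~~ (map_mx (intr : int -> rat) v <= AQ)%MS.
  apply/negP => /submxP [u hu].
  have [m [m0 [z hz]]] := clear_den u.
  apply: (Hv m m0).
  have -> : v *+ m = z *m A.
    have hu' : (m%:R : rat) *: map_mx (intr : int -> rat) v = map_mx intr (z *m A).
      by rewrite hu scalemxAl -hz map_mxM.
    apply/matrixP => i j; apply: (@intr_inj rat).
    have := congr1 (fun M : 'M[rat]_(1, s) => M i j) hu'.
    rewrite !mxE => <-.
    by rewrite -scaler_nat mxE rmorphM /= rmorph_nat mulr_natl.
  rewrite mulmx_sum_row; apply: (big_ind T) => // i _.
  exact: TZ.
set P := map_mx (intr : int -> rat) v *m cokermx AQ.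
have P0 : P != 0 by rewrite /P -submxE.
have [j Pj] : exists j, P 0 j != 0.
  case: (pickP (fun j => P 0 j != 0)) => [j Pj|H]; first by exists j.
  case/negP: P0; apply/eqP/matrixP => i k; rewrite (ord1 i) [RHS]mxE; move: (H k) => /negbT; rewrite negbK => /eqP; exact.
have colE (X : 'rV[rat]_s) : (X *m col j (cokermx AQ)) 0 0 = (X *m cokermx AQ) 0 j.
  by rewrite !mxE; apply: eq_bigr => k _; rewrite !mxE.
exists (col j (cokermx AQ)); split.
  move=> t /hT; rewrite submxE => /eqP H.
  by rewrite /chi colE H mxE.
by rewrite /chi colE.
Qed.

Import Order.TTheory.


Fixpoint lexle (x y : seq rat) : bool :=
  match x, y with
  | a :: x', b :: y' => (a < b) || ((a == b) && lexle x' y')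
  | _, _ => true
  end.

Definition key s (W : seq 'cV[rat]_s) (k : 'rV[int]_s) := [seq chi w k | w <- W].

Lemma lex_total s (W : seq 'cV[rat]_s) a b :
  lexle (key W a) (key W b) || lexle (key W b) (key W a).
Proof.
elim: W => [|w W IH] //=.
by case: (ltrgtP (chi w a) (chi w b)) => //= _; rewrite ?eqxx.
Qed.

Lemma lex_trans s (W : seq 'cV[rat]_s) a b c :
  lexle (key W a) (key W b) -> lexle (key W b) (key W c) -> lexle (key W a) (key W c).
Proof.
elim: W => [|w W IH] //=.
case/orP => [h1|/andP[/eqP e1 h1]]; case/orP => [h2|/andP[/eqP e2 h2]].
- by rewrite (lt_trans h1 h2).
- by rewrite -e2 h1.
- by rewrite e1 h2.
- by rewrite e1 e2 eqxx IH ?orbT.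
Qed.

Lemma lex_shift s (W : seq 'cV[rat]_s) a b c :
  lexle (key W (a + c)) (key W (b + c)) = lexle (key W a) (key W b).
Proof.
elim: W => [|w W IH] //=.
by rewrite !chiD ltrD2r (inj_eq (addIr _)) IH.
Qed.

Lemma lex_anti s (W : seq 'cV[rat]_s) a b :
  lexle (key W a) (key W b) -> lexle (key W b) (key W a) ->
  forall w, w \in W -> chi w a = chi w b.
Proof.
elim: W => [|w W IH] //= h1 h2 w'.
have ewab : chi w a = chi w b.
  move: h1 h2; case: (ltrgtP (chi w a) (chi w b)) => //=.
rewrite inE => /orP [/eqP ->|hw] //.
move: h1 h2; rewrite ewab ltxx eqxx /= => h1 h2.
exact: IH.
Qed.

Lemma lex_head s (w : 'cV[rat]_s) W a b :
  lexle (key (w :: W) a) (key (w :: W) b) -> chi w a <= chi w b.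
Proof. by case/orP => [h|/andP[/eqP -> _]]; [exact: ltW | exact: lexx]. Qed.

Lemma argmax (T : Type) (le : rel T) (f : nat -> T) n :
  (forall a b, le a b || le b a) -> (forall a b c, le a b -> le b c -> le a c) ->
  (0 < n)%N -> exists i, (i < n)%N /\ forall i', (i' < n)%N -> le (f i') (f i).
Proof.
move=> tot tr; elim: n => [|n IH] // _.
case: n IH => [|n] IH.
  exists 0%N; split => // i'; rewrite ltnS leqn0 => /eqP ->.
  by case/orP: (tot (f 0%N) (f 0%N)).
have [i [hi hmax]] := IH isT.
case/orP: (tot (f i) (f n.+1)) => h.
  exists n.+1; split => // i'; rewrite ltnS leq_eqVlt => /orP [/eqP ->|hi'].
    by case/orP: (tot (f n.+1) (f n.+1)).
  exact: tr (hmax _ hi') h.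
exists i; split; first exact: ltnW.
move=> i'; rewrite ltnS leq_eqVlt => /orP [/eqP ->|hi'] //.
exact: hmax.
Qed.

Lemma top (C : fieldType) (b1 a1 b2 a2 bg ag : seq C) s (ev : 'rV[int]_s -> C)
  (e1 eg : nat -> 'rV[int]_s) (le : rel 'rV[int]_s) :
  is_power_sum b1 a1 -> is_power_sum b2 a2 -> is_power_sum bg ag ->
  (forall n, psum b2 a2 n = psum b1 a1 n * psum bg ag n) ->
  (forall a b, ev (a + b) = ev a * ev b) ->
  (forall i, (i < size a1)%N -> ev (e1 i) = a1`_i) ->
  (forall j, (j < size ag)%N -> ev (eg j) = ag`_j) ->
  (forall a b, le a b || le b a) -> (forall a b c, le a b -> le b c -> le a c) ->
  (forall a b c, le (a + c) (b + c) = le a b) ->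
  (forall a b, ev a = ev b -> le a b) ->
  (forall i i', (i < size a1)%N -> (i' < size a1)%N ->
     le (e1 i) (e1 i') -> le (e1 i') (e1 i) -> i = i') ->
  exists i j, [/\ (i < size a1)%N, (j < size ag)%N,
    (forall i', (i' < size a1)%N -> le (e1 i') (e1 i)),
    (forall j', (j' < size ag)%N -> le (eg j') (eg j)) &
    a1`_i * ag`_j \in a2].
Proof.
move=> [s1 p1 nb1 na1 u1] [s2 p2 nb2 na2 u2] [sg pg nbg nag ug] Hf evD ev1 evg
  tot tr sh evle inj1.
have [i [hi mi]] := argmax (fun i => e1 i) tot tr p1.
have [j [hj mj]] := argmax (fun j => eg j) tot tr pg.
exists i, j; split => //.
set x := a1`_i * ag`_j.
have claim : forall i' j', (i' < size a1)%N -> (j' < size ag)%N ->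
    a1`_i' * ag`_j' = x -> i' = i /\ j' = j.
  move=> i' j' hi' hj' e.
  have l1 : le (e1 i + eg j) (e1 i' + eg j') by apply: evle; rewrite !evD !ev1 ?evg.
  have l2 : le (e1 i + eg j') (e1 i + eg j) by rewrite ![e1 i + _]addrC sh; exact: mj.
  have l3 : le (e1 i) (e1 i') by rewrite -(sh _ _ (eg j')); exact: tr l2 l1.
  have ii : i' = i by apply: inj1 => //; exact: mi.
  split => //; subst i'.
  have a1nz : a1`_i != 0 by move/allP: na1; apply; apply: mem_nth.
  by move/(mulfI a1nz): e => /eqP; rewrite nth_uniq // => /eqP.
set l := [seq (b2`_k, a2`_k) | k <- index_iota 0 (size a2)] ++
  [seq (-(b1`_i' * bg`_j'), a1`_i' * ag`_j') | i' <- index_iota 0 (size a1),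
     j' <- index_iota 0 (size ag)].
have hl : forall n, \sum_(p <- l) p.1 * p.2 ^+ n = 0.
  move=> n; rewrite big_cat /= !big_map big_allpairs_dep /=.
  rewrite big_mkord -[\sum_(k < size a2) _]/(psum b2 a2 n) Hf /psum.
  rewrite mulr_suml [X in _ + X]big_mkord -big_split big1 //= => i' _.
  rewrite mulr_sumr big_mkord -big_split big1 //= => j' _.
  rewrite exprMn; ring.
have := group_zero hl x.
rewrite big_mkcond big_cat /= !big_map big_allpairs_dep /=.
rewrite [X in _ + X = _](bigD1_seq i) ?mem_index_iota ?iota_uniq //=.
rewrite [X in _ + (X + _) = _](bigD1_seq j) ?mem_index_iota ?iota_uniq //= eqxx.
rewrite [X in _ + (_ + X + _) = _]big1_seq ?addr0; last first.
  move=> j' /andP[jj hj']; rewrite mem_index_iota /= in hj'.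
  case: ifP => // /eqP /(claim _ _ hi hj') [_ e]; by rewrite e eqxx in jj.
rewrite [X in _ + (_ + X) = _]big1_seq ?addr0; last first.
  move=> i' /andP[ii hi']; rewrite mem_index_iota /= in hi'.
  rewrite big1_seq // => j' /andP[_ hj']; rewrite mem_index_iota /= in hj'.
  case: ifP => // /eqP /(claim _ _ hi' hj') [e _]; by rewrite e eqxx in ii.
move=> H; apply: contraT => xn; move: H.
rewrite big1_seq ?add0r.
  have nz1 : b1`_i != 0 by move/allP: nb1; apply; apply: mem_nth; rewrite s1.
  have nz2 : bg`_j != 0 by move/allP: nbg; apply; apply: mem_nth; rewrite sg.
  by move/eqP; rewrite oppr_eq0 (negbTE (mulf_neq0 nz1 nz2)).
move=> k hk; rewrite mem_index_iota /= in hk.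
case: ifP => // /eqP ex; case/negP: xn; rewrite -ex; exact: mem_nth.
Qed.


Lemma lexle_refl x : lexle x x.
Proof. by elim: x => //= a x ->; rewrite eqxx orbT. Qed.

Lemma W_ex (C : fieldType) (S : seq C) (D : seq 'rV[int]_(size S)) :
  all (fun x => x != 0) S -> gen_torsion_free S ->
  exists W : seq 'cV[rat]_(size S),
    (forall w, w \in W -> forall t, ev (S:=S) t = 1 -> chi w t = 0) /\
    (forall d, d \in D -> ev (S:=S) d != 1 -> exists2 w, w \in W & chi w d != 0).
Proof.
move=> Snz Htf; elim: D => [|d D [W [HW1 HW2]]].
  by exists [::]; split.
case: (eqVneq (ev (S:=S) d) 1) => [e|ne].
  exists W; split => // d'; rewrite inE => /orP [/eqP ->|hd]; first by rewrite e eqxx.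
  exact: HW2.
have cD : forall a b, ev (S:=S) a = 1 -> ev (S:=S) b = 1 -> ev (S:=S) (a + b) = 1.
  by move=> a b ha hb; rewrite ev_add // ha hb mulr1.
have cZ : forall (z : int) a, ev (S:=S) a = 1 -> ev (S:=S) (z *: a) = 1.
  by move=> z a ha; rewrite ev_scale // ha exp1rz.
have cV : forall m, (0 < m)%N -> ~ ev (S:=S) (d *+ m) = 1.
  move=> m m0 h; move/negP: ne; apply; apply/eqP.
  by apply: (Htf _ (in_gen_ev d) m m0); rewrite -ev_mulrn.
have [w [hw1 hw2]] := sep (ev0 S) cD cZ cV.
exists (w :: W); split.
  move=> w'; rewrite inE => /orP [/eqP -> //|]; exact: HW1.
move=> d'; rewrite inE => /orP [/eqP -> _|hd hn]; first by exists w; rewrite ?inE ?eqxx.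
have [w' h1 h2] := HW2 d' hd hn; exists w' => //; by rewrite inE h1 orbT.
Qed.

Theorem lemma5p10 (R : realType) (b1 a1 b2 a2 bg ag : seq R[i]) :
  is_power_sum b1 a1 -> is_power_sum b2 a2 -> is_power_sum bg ag ->
  gen_torsion_free (a1 ++ a2 ++ ag) ->
  1 \in a1 ->
  (forall n : nat, psum b2 a2 n = psum b1 a1 n * psum bg ag n) ->
  forall gamma : R[i], gamma \in a1 ->
    exists k : nat, (0 < k)%N /\ in_gen a2 (gamma ^+ k).
Proof.
move=> P1 P2 Pg Htf one1 Hf gamma gin.
case: (P1) => s1 p1 nb1 na1 u1; case: (P2) => s2 p2 nb2 na2 u2.
case: (Pg) => sg pg nbg nag ug.
set S := a1 ++ a2 ++ ag.
have Snz : all (fun x => x != 0) S by rewrite !all_cat na1 na2 nag.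
apply: NNPP => Hn.
have Hv : forall m, (0 < m)%N -> ~ in_gen a2 (gamma ^+ m).
  by move=> m m0 h; apply: Hn; exists m.
set n1 := size a1; set n2 := size a2; set ng := size ag.
have sS : size S = (n1 + (n2 + ng))%N by rewrite !size_cat.
have S1 : forall i, (i < n1)%N -> S`_i = a1`_i by move=> i hi; rewrite nth_cat hi.
have S2 : forall l, (l < n2)%N -> S`_(n1 + l) = a2`_l.
  by move=> l hl; rewrite nth_cat ltnNge leq_addr /= addKn nth_cat hl.
have Sg : forall j, (j < ng)%N -> S`_(n1 + n2 + j) = ag`_j.
  move=> j hj; rewrite -addnA nth_cat ltnNge leq_addr /= addKn.
  by rewrite nth_cat ltnNge leq_addr /= addKn.
pose e1 i := eN S i; pose e2 l := eN S (n1 + l); pose eg j := eN S (n1 + n2 + j).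
have ev1 : forall i, (i < n1)%N -> ev (e1 i) = a1`_i.
  by move=> i hi; rewrite ev_eN ?S1 // sS (leq_trans hi) ?leq_addr.
have ev2 : forall l, (l < n2)%N -> ev (e2 l) = a2`_l.
  by move=> l hl; rewrite ev_eN ?S2 // sS ltn_add2l (leq_trans hl) ?leq_addr.
have evg : forall j, (j < ng)%N -> ev (eg j) = ag`_j.
  by move=> j hj; rewrite ev_eN ?Sg // sS addnA ltn_add2l.
have [ig hig gE] : exists2 ig, (ig < n1)%N & gamma = a1`_ig.
  by case/(nthP 0): gin => ig hig <-; exists ig.
have [i1 hi1 oneE] : exists2 i1, (i1 < n1)%N & 1 = a1`_i1.
  by case/(nthP 0): one1 => ig' hig' <-; exists ig'.
pose T2 := fun t : 'rV[int]_(size S) => in_gen a2 (ev t).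
have c0 : T2 0 by rewrite /T2 ev0; exact: in_gen1.
have cD : forall a b, T2 a -> T2 b -> T2 (a + b).
  by move=> a b; rewrite /T2 ev_add //; exact: in_gen_mul.
have cZ : forall (z : int) a, T2 a -> T2 (z *: a).
  by move=> z a; rewrite /T2 ev_scale //; exact: in_gen_exp.
have cV : forall m, (0 < m)%N -> ~ T2 (e1 ig *+ m).
  by move=> m m0; rewrite /T2 ev_mulrn // ev1 // -gE; exact: Hv.
have [psi [hpsi1 hpsi2]] := sep c0 cD cZ cV.
have psiT1 : forall t, ev (S:=S) t = 1 -> chi psi t = 0.
  by move=> t ht; apply: hpsi1; rewrite /T2 ht; exact: in_gen1.
pose D := [seq e1 p.1 - e1 p.2 | p <- [seq (i, i') | i <- iota 0 n1, i' <- iota 0 n1]].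
have [W0 [hW1 hW2]] := W_ex D Snz Htf.
have evB : forall a b, ev (S:=S) (a - b) = ev a / ev b.
  by move=> a b; rewrite ev_add // ev_neg.
pose good (W : seq 'cV[rat]_(size S)) :=
  (forall w, w \in W -> forall t, ev (S:=S) t = 1 -> chi w t = 0) /\
  (forall i i', (i < n1)%N -> (i' < n1)%N -> i != i' ->
     exists2 w, w \in W & chi w (e1 i) != chi w (e1 i')).
have goodW : good (psi :: W0).
  split.
    move=> w; rewrite inE => /orP [/eqP ->|]; [exact: psiT1 | exact: hW1].
  move=> i i' hi hi' ne.
  have dD : e1 i - e1 i' \in D.
    rewrite /D; apply/mapP; exists (i, i') => //; apply/allpairsP; exists (i, i').
    by rewrite !mem_iota /= hi hi'.
  have nd : ev (S:=S) (e1 i - e1 i') != 1.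
    rewrite evB ev1 // ev1 //; apply/negP => /eqP h.
    have a1nz : a1`_i' != 0 by move/allP: na1; apply; apply: mem_nth.
    have e : a1`_i = a1`_i' by rewrite -(divfK a1nz (a1`_i)) h mul1r.
    by move/eqP: e; rewrite nth_uniq // (negbTE ne).
  have [w hw hne] := hW2 _ dD nd.
  exists w; first by rewrite inE hw orbT.
  by move: hne; rewrite chiB subr_eq0.
have goodWn : good (- psi :: [seq - w | w <- W0]).
  case: goodW => g1 g2; split.
    move=> w; rewrite inE => /orP [/eqP ->|/mapP [w' hw' ->]] t ht;
      rewrite chi_opp ?psiT1 ?oppr0 //.
    by rewrite (g1 w') ?oppr0 // inE hw' orbT.
  move=> i i' hi hi' ne; have [w hw hne] := g2 i i' hi hi' ne.
  exists (- w); last by rewrite !chi_opp (inj_eq oppr_inj).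
  move: hw; rewrite !inE => /orP [/eqP ->|hw]; first by rewrite eqxx.
  by rewrite map_f ?orbT.
have app : forall W, good W -> exists i j, [/\ (i < n1)%N, (j < ng)%N,
    (forall i', (i' < n1)%N -> lexle (key W (e1 i')) (key W (e1 i))),
    (forall j', (j' < ng)%N -> lexle (key W (eg j')) (key W (eg j))) &
    a1`_i * ag`_j \in a2].
  move=> W [g1 g2].
  apply: (top (ev := ev (S:=S)) (le := fun a b => lexle (key W a) (key W b))
    P1 P2 Pg Hf (ev_add Snz) ev1 evg).
  - exact: lex_total.
  - exact: lex_trans.
  - exact: lex_shift.
  - move=> a b e; have -> : key W a = key W b.
      rewrite /key; apply/eq_in_map => w hw; apply/eqP; rewrite -subr_eq0 -chiB.
      by apply/eqP; apply: g1 => //; rewrite evB e mulfV ?ev_nz.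
    exact: lexle_refl.
  - move=> i i' hi hi' h1 h2; case: (eqVneq i i') => // ne.
    have [w hw hne] := g2 i i' hi hi' ne.
    by rewrite (lex_anti h1 h2 hw) eqxx in hne.
have [i [j [hi hj mi mj inA]]] := app _ goodW.
have [im [jm [him hjm mim mjm inAm]]] := app _ goodWn.
have sumz : forall i j, (i < n1)%N -> (j < ng)%N -> a1`_i * ag`_j \in a2 ->
    chi psi (e1 i) + chi psi (eg j) = 0.
  move=> i' j' hi' hj' /(nthP 0) [l hl el].
  rewrite -chiD.
  have -> : chi psi (e1 i' + eg j') = chi psi (e2 l).
    apply/eqP; rewrite -subr_eq0 -chiB; apply/eqP; apply: psiT1.
    rewrite evB ev_add // ev1 // evg // ev2 // el mulfV //.
    by rewrite mulf_neq0 //; [move/allP: na1 | move/allP: nag]; apply; apply: mem_nth.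
  apply: hpsi1; rewrite /T2 ev2 //; apply: in_gen_mem => //; exact: mem_nth.
have z1 : chi psi (e1 i1) = 0.
  by apply: psiT1; rewrite ev1.
have A1 := sumz _ _ hi hj inA.
have A2 := sumz _ _ him hjm inAm.
have B1 : chi psi (eg jm) <= chi psi (eg j) := lex_head (mj _ hjm).
have B2 : chi psi (e1 i1) <= chi psi (e1 i) := lex_head (mi _ hi1).
have B3 : chi psi (e1 ig) <= chi psi (e1 i) := lex_head (mi _ hig).
have B4 : chi psi (e1 im) <= chi psi (e1 i1).
  by have := lex_head (mim _ hi1); rewrite !chi_opp lerN2.
have B5 : chi psi (e1 im) <= chi psi (e1 ig).
  by have := lex_head (mim _ hig); rewrite !chi_opp lerN2.
move: hpsi2; rewrite eq_le negb_and; apply/negP; rewrite negb_or !negbK.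
apply/andP; split; rewrite -/(chi psi (e1 ig)); lra.
Qed.
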